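(* Let $m\ge 0$ and $n \ge 2m$ be integers. Then for every real $r$ with $|r|>1$, $$\int_{-1}^1 \frac{T_n(s)(1-s^2)^{m-\frac{1}{2}}}{s-r}\,ds = \pi(-1)^{m+1}\frac{|r|}{r}(r^2-1)^{m-\frac{1}{2}}\left(r-\frac{|r|}{r}\sqrt{r^2-1}\right)^n.$$
   Context: $T_k(s)=\cos(k\cos^{-1}s)$ is the Tchebyshev polynomial of the first kind. Since $|r|>1$, the integrand has no singularity in the interior of $(-1,1)$ and the integral is an ordinary (improper at $\pm1$ when $m=0$) integral. *)

(* Defs.v *)
From Stdlib Require Import Reals Lra.
From Coquelicot Require Import Coquelicot.
Open Scope R_scope.

(* Chebyshev polynomial of the first kind, T_k(s) = cos(k arccos s), for s in [-1,1]. *)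
Definition chebT (k : nat) (s : R) : R := cos (INR k * acos s).

Definition integrand (n m : nat) (r s : R) : R :=
  chebT n s * Rpower (1 - s ^ 2) (INR m - / 2) / (s - r).

(* Main.v *)
Require Import Defs.
From Stdlib Require Import Reals Lra Lia Nsatz.
From Coquelicot Require Import Coquelicot.
Open Scope R_scope.


Lemma RInt_lin (f g : R -> R) (a b al be : R) :
  ex_RInt f a b -> ex_RInt g a b ->
  RInt (fun x => al * f x + be * g x) a b = al * RInt f a b + be * RInt g a b.
Proof.
  intros Hf Hg. apply is_RInt_unique.
  apply (is_RInt_plus (fun x => al * f x) (fun x => be * g x)).
  - apply (is_RInt_scal f). exact (RInt_correct _ _ _ Hf).
  - apply (is_RInt_scal g). exact (RInt_correct _ _ _ Hg).
Qed.

Lemma ex_RInt_der (f : R -> R) a b : (forall x, ex_derive f x) -> ex_RInt f a b.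
Proof. intros H. apply (ex_RInt_continuous (V:=R_CompleteNormedModule)). intros z _. exact (ex_derive_continuous f z (H z)). Qed.

Definition hh (m n : nat) (r t : R) := cos (INR n * t) * sin t ^ (2 * m) / (cos t - r).

Lemma cos_r_neq (r t : R) : 1 < Rabs r -> cos t - r <> 0.
Proof.
  intros Hr. pose proof (COS_bound t). unfold Rabs in Hr; destruct (Rcase_abs r); lra.
Qed.


Lemma ex_der_hh m n r x : 1 < Rabs r -> ex_derive (hh m n r) x.
Proof. intros Hr. unfold hh. auto_derive. now apply cos_r_neq. Qed.

Lemma ex_RInt_hh m n r a b : 1 < Rabs r -> ex_RInt (hh m n r) a b.
Proof. intros Hr. apply ex_RInt_der. intros; now apply ex_der_hh. Qed.

Lemma J0 (r rho : R) : 1 < Rabs r -> -1 < rho < 1 -> rho <> 0 -> r = (rho*rho+1)/(2*rho) ->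
  RInt (hh 0 0 r) 0 PI = -2*rho*PI/(1-rho*rho).
Proof.
  intros Hr Hrho Hnz Hrr.
  set (F := fun t => -2*rho/(1-rho*rho) * (t + 2*atan(rho*sin t/(1-rho*cos t)))).
  assert (H1 : forall t, 0 < 1 - rho * cos t).
  { intros t. pose proof (COS_bound t). destruct (Rle_dec 0 rho); nra. }
  assert (Hd : forall t, is_derive F t (hh 0 0 r t)).
  { intros t. unfold F, hh. auto_derive.
    - specialize (H1 t). lra.
    - specialize (H1 t). pose proof (cos_r_neq r t Hr).
      replace (INR 0 * t) with 0 by (simpl; ring). rewrite cos_0. simpl.
      rewrite Hrr in *. pose proof (sin2_cos2 t). unfold Rsqr in *.
      set (c := cos t) in *; set (s := sin t) in *. assert (H2: 2*rho*c - rho*rho - 1 <> 0). { intro E. apply H. replace (c - _) with ((2*rho*c - rho*rho - 1)/(2*rho)) by (field; auto). rewrite E. field. auto. } clearbody c s. clear F. field_simplify_eq. { replace (s^2) with (1 - c^2) by (rewrite <- H0; ring). ring. } split; [auto|]. split; [intro E; apply H2; lra|]. split; [lra|]. split; [nra|]. nra. }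
  apply is_RInt_unique.
  assert (E : -2*rho*PI/(1-rho*rho) = minus (F PI) (F 0)).
  { unfold F, minus, plus, opp; simpl. rewrite sin_PI, sin_0.
    replace (rho*0/(1-rho*cos PI)) with 0 by (field; specialize (H1 PI); lra).
    replace (rho*0/(1-rho*cos 0)) with 0 by (field; specialize (H1 0); lra).
    rewrite atan_0. field. nra. }
  rewrite E. apply (is_RInt_derive (V:=R_CompleteNormedModule)).
  - intros; apply Hd.
  - intros x _. apply (ex_derive_continuous (V:=R_NormedModule)). now apply ex_der_hh.
Qed.


Ltac toR := match goal with |- @eq _ ?a ?b => change (@eq R a b) end.

Lemma RInt_lin3 (f g h : R -> R) (a b al be ga : R) :
  ex_RInt f a b -> ex_RInt g a b -> ex_RInt h a b ->
  RInt (fun x => al * f x + be * g x + ga * h x) a b = al * RInt f a b + be * RInt g a b + ga * RInt h a b.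
Proof.
  intros Hf Hg Hh. apply is_RInt_unique.
  apply (is_RInt_plus (fun x => al * f x + be * g x) (fun x => ga * h x)).
  apply (is_RInt_plus (fun x => al * f x) (fun x => be * g x)).
  - apply (is_RInt_scal f). exact (RInt_correct _ _ _ Hf).
  - apply (is_RInt_scal g). exact (RInt_correct _ _ _ Hg).
  - apply (is_RInt_scal h). exact (RInt_correct _ _ _ Hh).
Qed.

Lemma Icos (k : nat) : (1 <= k)%nat -> RInt (fun t => cos (INR k * t)) 0 PI = 0.
Proof.
  intros Hk. assert (Hk' : INR k <> 0) by (apply not_0_INR; lia).
  apply is_RInt_unique.
  set (F := fun t => sin (INR k * t) / INR k).
  assert (E : minus (F PI) (F 0) = 0).
  { unfold F, minus, plus, opp; simpl. rewrite Rmult_0_r, sin_0.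
    rewrite (sin_eq_0_1 (INR k * PI)). field. auto.
    exists (Z.of_nat k). now rewrite <- INR_IZR_INZ. }
  assert (HI : is_RInt (fun t => cos (INR k*t)) 0 PI (minus (F PI) (F 0))).
  { apply (is_RInt_derive (V:=R_CompleteNormedModule)).
  + intros x _. unfold F. auto_derive; auto. field. auto.
  + intros x _. apply (ex_derive_continuous (V:=R_NormedModule)). auto_derive. auto. }
  rewrite E in HI. exact HI.
Qed.

Section K.
Variable r : R.
Hypothesis Hr : 1 < Rabs r.
Definition K m n := RInt (hh m n r) 0 PI.

Lemma K01 : K 0 1 = PI + r * K 0 0.
Proof.
  unfold K. rewrite (RInt_ext _ (fun t => 1 * (fun _ => 1) t + r * hh 0 0 r t)).
  - rewrite RInt_lin. rewrite RInt_const. unfold scal; simpl. unfold mult; simpl. ring.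
    apply ex_RInt_const. now apply ex_RInt_hh.
  - intros x _. unfold hh. simpl. pose proof (cos_r_neq r x Hr).
    rewrite Rmult_1_l, Rmult_0_l, cos_0. field. auto.
Qed.

Lemma K0rec k : K 0 (k+2) = 2 * r * K 0 (k+1) - K 0 k.
Proof.
  unfold K. rewrite (RInt_ext _ (fun t => 2 * (fun t => cos (INR (k+1) * t)) t + (2*r) * hh 0 (k+1) r t + (-1) * hh 0 k r t)).
  - rewrite RInt_lin3. rewrite Icos by lia. toR; ring.
    apply ex_RInt_der. intros; auto_derive; auto.
    now apply ex_RInt_hh. now apply ex_RInt_hh.
  - intros x _. unfold hh. pose proof (cos_r_neq r x Hr).
    replace (INR (k+2) * x) with (INR (k+1) * x + x) by (rewrite !plus_INR; simpl; ring).
    replace (INR k * x) with (INR (k+1) * x - x) by (rewrite !plus_INR; simpl; ring).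
    rewrite cos_plus, cos_minus. simpl. field. auto.
Qed.

Lemma Kmrec m k : K (S m) (k+2) = /2 * K m (k+2) + (-/4) * K m (k+4) + (-/4) * K m k.
Proof.
  unfold K. rewrite <- RInt_lin3 by (now apply ex_RInt_hh).
  apply RInt_ext. intros x _. unfold hh. pose proof (cos_r_neq r x Hr).
  replace (INR (k+4) * x) with (INR (k+2) * x + 2 * x) by (rewrite !plus_INR; simpl; ring).
  replace (INR k * x) with (INR (k+2) * x - 2 * x) by (rewrite !plus_INR; simpl; ring).
  rewrite cos_plus, cos_minus.
  replace (2 * S m)%nat with (2 * m + 2)%nat by lia. rewrite pow_add.
  rewrite cos_2a_sin, sin_2a. toR; field. auto.
Qed.
End K.


Lemma Kclosed (r rho : R) : 1 < Rabs r -> -1 < rho < 1 -> rho <> 0 -> r = (rho*rho+1)/(2*rho) ->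
  forall m n, (2 * m <= n)%nat -> K r m n = -2*rho*PI/(1-rho*rho) * (1 - r*r)^m * rho^n.
Proof.
  intros Hr Hrho Hnz Hrr.
  assert (H1r : 1 - rho*rho <> 0) by nra.
  assert (Base : forall k, K r 0 k = -2*rho*PI/(1-rho*rho) * rho^k /\
                           K r 0 (k+1) = -2*rho*PI/(1-rho*rho) * rho^(k+1)).
  { induction k as [|k [IH1 IH2]].
    - simpl. assert (E : K r 0 0 = -2*rho*PI/(1-rho*rho)) by (unfold K; eapply J0; eauto).
      split.
      + rewrite E. toR; ring.
      + rewrite (K01 r Hr), E. rewrite Hrr. toR; field. auto.
    - split.
      + replace (S k) with (k+1)%nat by lia. exact IH2.
      + replace (S k + 1)%nat with (k+2)%nat by lia. rewrite (K0rec r Hr), IH1, IH2.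
        replace (k+2)%nat with (S (S k)) by lia. replace (k+1)%nat with (S k) by lia.
        simpl. rewrite Hrr. toR; field. auto. }
  induction m as [|m IHm]; intros n Hn.
  - simpl. rewrite (proj1 (Base n)). toR; ring.
  - destruct n as [|[|k]]; [lia|lia|].
    replace (S (S k)) with (k+2)%nat by lia.
    rewrite (Kmrec r Hr), !IHm by lia.
    replace (k+2)%nat with (S (S k)) by lia. replace (k+4)%nat with (S (S (S (S k)))) by lia.
    simpl. set (P := (1 - r*r)^m). set (Q := rho^k). rewrite Hrr. toR; field. auto.
Qed.


Lemma acos_gt t x : 0 <= t <= PI -> -1 <= x <= 1 -> x < cos t -> t < acos x.
Proof.
  intros Ht Hx Hc. pose proof (acos_bound x). rewrite <- (cos_acos x Hx) in Hc.
  destruct (Rlt_le_dec t (acos x)) as [|Hle]; auto.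
  destruct (Req_dec (acos x) t) as [E|E].
  - rewrite E in Hc. lra.
  - assert (cos t < cos (acos x)) by (apply cos_decreasing_1; lra). lra.
Qed.

Lemma acos_lt t x : 0 <= t <= PI -> -1 <= x <= 1 -> cos t < x -> acos x < t.
Proof.
  intros Ht Hx Hc. pose proof (acos_bound x). rewrite <- (cos_acos x Hx) in Hc.
  destruct (Rlt_le_dec (acos x) t) as [|Hle]; auto.
  destruct (Req_dec (acos x) t) as [E|E].
  - rewrite E in Hc. lra.
  - assert (cos (acos x) < cos t) by (apply cos_decreasing_1; lra). lra.
Qed.

Lemma ball_R (x e y : R) : ball x e y <-> Rabs (y - x) < e.
Proof. reflexivity. Qed.

Lemma lim_acos_m1 : filterlim acos (at_right (-1)) (locally PI).
Proof.
  intros P [eps HP]. pose proof PI_RGT_0.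
  set (e := Rmin (eps/2) (PI/2)).
  assert (He : 0 < e) by (apply Rmin_glb_lt; pose proof (cond_pos eps); lra).
  assert (He2 : e <= PI/2) by apply Rmin_r.
  assert (He3 : e <= eps/2) by apply Rmin_l.
  assert (Hce : cos e < 1) by (rewrite <- cos_0; apply cos_decreasing_1; lra).
  assert (Hd : 0 < 1 - cos e) by lra.
  assert (Hc0 : 0 <= cos e) by (apply cos_ge_0; lra).
  exists (mkposreal _ Hd). intros y Hy Hy1. apply HP. change (Rabs (acos y - PI) < eps). change (Rabs (y - -1) < 1 - cos e) in Hy.
  rewrite Rabs_lt_between in Hy.
  assert (Hy2 : y < cos (PI - e)) by (rewrite cos_minus, cos_PI, sin_PI; lra).
  assert (PI - e < acos y) by (apply acos_gt; lra).
  pose proof (acos_bound y). rewrite Rabs_lt_between. lra.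
Qed.

Lemma lim_acos_1 : filterlim acos (at_left 1) (locally 0).
Proof.
  intros P [eps HP]. pose proof PI_RGT_0.
  set (e := Rmin (eps/2) (PI/2)).
  assert (He : 0 < e) by (apply Rmin_glb_lt; pose proof (cond_pos eps); lra).
  assert (He2 : e <= PI/2) by apply Rmin_r.
  assert (He3 : e <= eps/2) by apply Rmin_l.
  assert (Hce : cos e < 1) by (rewrite <- cos_0; apply cos_decreasing_1; lra).
  assert (Hd : 0 < 1 - cos e) by lra.
  assert (Hc0 : 0 <= cos e) by (apply cos_ge_0; lra).
  exists (mkposreal _ Hd). intros y Hy Hy1. apply HP. change (Rabs (acos y - 0) < eps). change (Rabs (y - 1) < 1 - cos e) in Hy.
  rewrite Rabs_lt_between in Hy.
  assert (acos y < e) by (apply acos_lt; lra).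
  pose proof (acos_bound y). rewrite Rabs_lt_between. lra.
Qed.

Lemma inside : filter_prod (at_right (-1)) (at_left 1)
  (fun ab => forall x, Rmin (fst ab) (snd ab) <= x <= Rmax (fst ab) (snd ab) -> -1 < x < 1).
Proof.
  apply (Filter_prod _ _ _ (fun a => -1 < a < 1) (fun b => -1 < b < 1)).
  - exists (mkposreal 1 Rlt_0_1). intros y Hy Hy1. change (Rabs (y - -1) < 1) in Hy.
    rewrite Rabs_lt_between in Hy. lra.
  - exists (mkposreal 1 Rlt_0_1). intros y Hy Hy1. change (Rabs (y - 1) < 1) in Hy.
    rewrite Rabs_lt_between in Hy. lra.
  - intros a b Ha Hb x Hx. simpl in Hx.
    unfold Rmin, Rmax in Hx. destruct (Rle_dec a b); lra.
Qed.



Lemma acos_der x : -1 < x < 1 -> is_derive acos x (-1/sqrt(1 - x²)).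
Proof.
  intros Hx. apply is_derive_Reals. apply (derive_pt_eq_1 _ _ _ (derivable_pt_acos x Hx)).
  apply derive_pt_acos.
Qed.

Lemma sq_pos x : -1 < x < 1 -> 0 < 1 - x².
Proof. intros. unfold Rsqr. nra. Qed.

Lemma ident m n r s : 1 < Rabs r -> -1 < s < 1 ->
  hh m n r (acos s) / sqrt (1 - s²) = integrand n m r s.
Proof.
  intros Hr Hs. pose proof (sq_pos s Hs) as Hp.
  assert (Hq : 0 < sqrt (1 - s²)) by (apply sqrt_lt_R0; auto).
  unfold hh, integrand, chebT. rewrite cos_acos by lra. rewrite sin_acos by lra.
  replace (1 - s^2) with (1 - s²) by (unfold Rsqr; ring).
  replace (INR m - /2) with (INR m + - /2) by ring.
  rewrite Rpower_plus, Rpower_Ropp, Rpower_pow, Rpower_sqrt by auto.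
  rewrite pow_mult. replace (sqrt (1 - s²) ^ 2) with (1 - s²) by (simpl; rewrite Rmult_1_r, sqrt_sqrt; lra).
  assert (s - r <> 0) by (pose proof (cos_r_neq r (acos s) Hr); rewrite cos_acos in H by lra; auto).
  field. split; lra.
Qed.

Lemma sgen m n r : 1 < Rabs r ->
  is_RInt_gen (integrand n m r) (at_right (-1)) (at_left 1) (K r m n).
Proof.
  intros Hr.
  set (h := hh m n r).
  set (H := (fun x => RInt h 0 x) : R -> R).
  assert (HH : forall x, is_derive H x (h x)).
  { intros x. apply (is_derive_RInt (V:=R_CompleteNormedModule) h H 0 x).
    - apply filter_forall. intros y. unfold H. exact (RInt_correct _ _ _ (ex_RInt_hh m n r 0 y Hr)).
    - apply (ex_derive_continuous (V:=R_NormedModule)). now apply ex_der_hh. }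
  set (G := (fun s => - H (acos s)) : R -> R).
  assert (HG : forall s, -1 < s < 1 -> is_derive G s (h (acos s) / sqrt (1 - s²))).
  { intros s Hs. pose proof (sq_pos s Hs) as Hp.
    assert (Hq : 0 < sqrt (1 - s²)) by (apply sqrt_lt_R0; auto).
    assert (D : is_derive G s (opp (scal (-1/sqrt(1 - s²)) (h (acos s))))).
    { unfold G. apply (is_derive_opp (K:=R_AbsRing) (V:=R_NormedModule) (fun s => H (acos s))). apply (is_derive_comp (K:=R_AbsRing) (V:=R_NormedModule) H acos). apply HH. now apply acos_der. }
    replace (h (acos s) / sqrt (1 - s²)) with (opp (scal (-1/sqrt(1 - s²)) (h (acos s)))).
    exact D. unfold opp, scal; simpl. unfold mult; simpl. field. lra. }
  assert (DG : forall s, -1 < s < 1 -> Derive G s = integrand n m r s).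
  { intros s Hs. rewrite (is_derive_unique _ _ _ (HG s Hs)). unfold h. now apply ident. }
  assert (CG : forall x, -1 < x < 1 -> continuous (Derive G) x).
  { intros x Hx.
    apply (continuous_ext_loc (T:=R_UniformSpace) (U:=R_UniformSpace) _ (fun y => (fun t => h t / sin t) (acos y)) x).
    - assert (Hd : 0 < Rmin (x+1) (1-x)) by (apply Rmin_glb_lt; lra).
      exists (mkposreal _ Hd). intros y Hy. change (Rabs (y - x) < Rmin (x+1) (1-x)) in Hy.
      pose proof (Rmin_l (x+1) (1-x)). pose proof (Rmin_r (x+1) (1-x)).
      rewrite Rabs_lt_between in Hy.
      assert (Hy' : -1 < y < 1) by lra.
      rewrite (is_derive_unique _ _ _ (HG y Hy')). rewrite sin_acos by lra. reflexivity.
    - apply (continuous_comp acos (fun t => h t / sin t)).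
      + apply (ex_derive_continuous (V:=R_NormedModule)). eexists. now apply acos_der.
      + apply (ex_derive_continuous (V:=R_NormedModule)). unfold h, hh.
        pose proof (cos_r_neq r (acos x) Hr).
        assert (0 < sin (acos x)) by (rewrite sin_acos by lra; apply sqrt_lt_R0; now apply sq_pos).
        auto_derive. repeat split; auto; lra. }
  assert (CH : forall t, continuous (fun t => - H t) t).
  { intros t. apply (ex_derive_continuous (V:=R_NormedModule)). exists (- h t).
    apply (is_derive_opp (K:=R_AbsRing) (V:=R_NormedModule) H). apply HH. }
  assert (E : K r m n = - H 0 - - H PI).
  { assert (H0 : H 0 = 0) by (exact (RInt_point 0 h)).
    change (K r m n) with (H PI). rewrite H0. toR; ring. }
  rewrite E.
  apply (is_RInt_gen_ext (V:=R_NormedModule) (Derive G)).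
  - apply (filter_imp _ _ (fun ab H1 x Hx => DG x (H1 x (conj (Rlt_le _ _ (proj1 Hx)) (Rlt_le _ _ (proj2 Hx))))) inside).
  - apply is_RInt_gen_Derive.
    + apply (filter_imp _ _ (fun ab H1 x Hx => ex_intro _ _ (HG x (H1 x Hx))) inside).
    + apply (filter_imp _ _ (fun ab H1 x Hx => CG x (H1 x Hx)) inside).
    + apply (filterlim_comp _ _ _ acos (fun t => - H t) _ (locally PI)).
      apply lim_acos_m1. apply CH.
    + apply (filterlim_comp _ _ _ acos (fun t => - H t) _ (locally 0)).
      apply lim_acos_1. apply CH.
Qed.


Theorem mainTheorem9 (m n : nat) (hmn : (2 * m <= n)%nat) (r : R) (hr : 1 < Rabs r) :
  is_RInt_gen (integrand n m r) (at_right (-1)) (at_left 1)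
    (PI * (-1) ^ (m + 1) * (Rabs r / r) * Rpower (r ^ 2 - 1) (INR m - / 2)
       * (r - (Rabs r / r) * sqrt (r ^ 2 - 1)) ^ n).
Proof.
  set (sg := Rabs r / r). set (q := sqrt (r^2 - 1)). set (rho := r - sg * q).
  assert (Hp : 0 < r^2 - 1) by (unfold Rabs in hr; destruct (Rcase_abs r); nra).
  assert (Hq : 0 < q) by (apply sqrt_lt_R0; auto).
  assert (Hq2 : q * q = r^2 - 1) by (apply sqrt_sqrt; lra).
  assert (Hsg : (sg = 1 /\ 1 < r) \/ (sg = -1 /\ r < -1)).
  { unfold sg, Rabs in *. destruct (Rcase_abs r).
    - right. split; [field|]; lra.
    - left. split; [field|]; lra. }
  assert (Hrho : -1 < rho < 1 /\ rho <> 0 /\ sg * (1 - rho*rho) = 2*q*rho /\ rho*rho - 2*r*rho + 1 = 0).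
  { unfold rho. destruct Hsg as [[E Hr1]|[E Hr1]]; rewrite E.
    - assert (q < r) by nra. assert (r - 1 < q) by nra.
      repeat split; try lra; try nra.
    - assert (q < -r) by nra. assert (-r - 1 < q) by nra.
      repeat split; try lra; try nra. }
  destruct Hrho as [Hb [Hnz [Key Hquad]]].
  assert (H1r : 1 - rho*rho <> 0) by nra.
  assert (Hrr : r = (rho*rho+1)/(2*rho)).
  { replace (rho*rho+1) with (2*r*rho) by lra. field. auto. }
  assert (HK := Kclosed r rho hr Hb Hnz Hrr m n hmn).
  assert (Hval : PI * (-1) ^ (m + 1) * sg * Rpower (r ^ 2 - 1) (INR m - / 2) * rho ^ n = K r m n).
  { rewrite HK.
    replace (INR m - /2) with (INR m + - /2) by ring.
    rewrite Rpower_plus, Rpower_Ropp, Rpower_pow, Rpower_sqrt by auto. fold q.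
    replace (1 - r*r) with (-1 * (r^2-1)) by ring. rewrite Rpow_mult_distr, pow_add.
    replace (-2*rho*PI/(1-rho*rho)) with (-PI*(sg*(1-rho*rho))/(q*(1-rho*rho))).
    2:{ rewrite Key. field. split; lra. }
    field. split; lra. }
  rewrite Hval. now apply sgen.
Qed.
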